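(* Let $\Gamma$ be a weighted digraph with vertex set $V$ and normalized matrix of maximum out-forests $\bar J$; let $\widetilde K$ be the union of the vertex sets of all basis bicomponents of $\Gamma$; for $k\in\widetilde K$ let $K(k)$ be the basis bicomponent containing $k$ and $K^+(k)$ the set of vertices reachable by directed paths from $K(k)$ and unreachable from all other basis bicomponents. Then for all $i,j\in V$: (1) $\bar J_{ii}\ge\bar J_{ji}$; (2) if $\bar J_{ii}>\bar J_{ji}$, then $i\in\widetilde K$ and $j\notin K^+(i)$, and $\Gamma$ contains no directed path from $j$ to $i$; (3) if $\bar J_{ii}>\bar J_{ji}>0$, then $j\notin\widetilde K$, and consequently $j$ is not a root in any maximum out-forest of $\Gamma$; (4) if $\bar J_{ij}>0$, then $\bar J_{ii}=\bar J_{ji}$.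
   Context: A weighted digraph $\Gamma$ has no loops and each arc has a positive weight. A diverging tree is a rooted directed tree with directed paths from its root to all its other vertices; an out-forest is a spanning subgraph whose weak components are diverging trees; a maximum out-forest is one with the maximum number of arcs. The weight of a subgraph is the product of its arc weights. $\bar J_{ij}$ is the total weight of the maximum out-forests of $\Gamma$ in which $i$ belongs to the tree rooted at $j$, divided by the total weight of all maximum out-forests. A basis bicomponent is a strong component into which no arc enters from outside it. *)

(* Defs.v *)
From HB Require Import structures.
From mathcomp Require Import all_boot all_order all_algebra.
Set Implicit Arguments. Unset Strict Implicit. Unset Printing Implicit Defensive.
Import Order.TTheory GRing.Theory Num.Theory.

(* A weighted digraph on a finite vertex type V is given by
   an arc relation E : rel V (no loops) and a weight function w : V -> V -> R
   which is positive on arcs.  Subgraphs are sets of arcs. *)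

Section Forests.
Variables (V : finType).

Definition srel (F : {set V * V}) : rel V := fun u v => (u, v) \in F.

Definition is_root (F : {set V * V}) (v : V) : bool :=
  [forall u, (u, v) \notin F].

(* Out-forest of the digraph E: a spanning subgraph (arcs of E) whose weak
   components are diverging trees, i.e. every vertex has in-degree at most 1
   and every vertex is reachable by a directed path (in F) from a root. *)
Definition out_forest (E : rel V) (F : {set V * V}) : bool :=
  [&& [forall a in F, E a.1 a.2],
      [forall v, #|[set u | (u, v) \in F]| <= 1] &
      [forall v, exists r, is_root F r && connect (srel F) r v]].

Definition max_forest_size (E : rel V) : nat :=
  \max_(F : {set V * V} | out_forest E F) #|F|.

Definition max_out_forest (E : rel V) (F : {set V * V}) : bool :=
  out_forest E F && (#|F| == max_forest_size E).

Definition in_tree_of (F : {set V * V}) (i j : V) : bool :=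
  is_root F j && connect (srel F) j i.

Variable R : realFieldType.

Definition fweight (w : V -> V -> R) (F : {set V * V}) : R :=
  \prod_(a in F) w a.1 a.2.

Definition Jbar (E : rel V) (w : V -> V -> R) (i j : V) : R :=
  (\sum_(F : {set V * V} | max_out_forest E F && in_tree_of F i j) fweight w F)
  / (\sum_(F : {set V * V} | max_out_forest E F) fweight w F).

Definition strong_comp (E : rel V) (k : V) : {set V} :=
  [set v | connect E k v && connect E v k].

Definition is_basis_bicomp (E : rel V) (S : {set V}) : bool :=
  [exists k, S == strong_comp E k] &&
  [forall u, forall v, (E u v && (v \in S)) ==> (u \in S)].

Definition Ktilde (E : rel V) : {set V} :=
  [set v | [exists S : {set V}, is_basis_bicomp E S && (v \in S)]].

Definition Kof (E : rel V) (k : V) : {set V} := strong_comp E k.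

Definition Kplus (E : rel V) (k : V) : {set V} :=
  [set v | [exists u in Kof E k, connect E u v] &&
           [forall S : {set V}, (is_basis_bicomp E S && (S != Kof E k)) ==>
                                 [forall u in S, ~~ connect E u v]]].

End Forests.

(* Main.v *)
Require Import Defs.
From HB Require Import structures.
From mathcomp Require Import all_boot all_order all_algebra.
Import Order.TTheory GRing.Theory Num.Theory.
Set Implicit Arguments. Unset Strict Implicit. Unset Printing Implicit Defensive.

Section Graph.
Variables (V : finType) (E : rel V).
Implicit Types (F : {set V * V}).

Lemma LA (e : rel V) a b : connect e a b -> a != b -> exists2 w, connect e a w & e w b.
Proof.
move=> /connectP [p pth ->]; elim/last_ind: p pth => [|q z _] /=; first by rewrite eqxx.
rewrite rcons_path last_rcons => /andP [pq ez] _.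
by exists (last a q) => //; apply/connectP; exists q.
Qed.

Lemma CL (e : rel V) (P : pred V) a b :
  (forall u v, P u -> e u v -> P v) -> P a -> connect e a b -> P b.
Proof.
move=> H Pa /connectP [p pth ->]; elim: p a Pa pth => [|z p IH] a Pa //= /andP [eaz pth].
exact: IH (H _ _ Pa eaz) pth.
Qed.

Lemma split_conn (e : rel V) a s y : path e a s -> y \in s -> connect e y (last a s).
Proof.
move=> pth ys; case/splitPr: ys pth => p1 p2.
rewrite cat_path last_cat /= => /andP [_ /andP [_ pth]].
by apply/connectP; exists p2.
Qed.

Lemma of_arc F u v : out_forest E F -> (u, v) \in F -> E u v.
Proof. by case/and3P => /forall_inP H _ _ /H. Qed.

Lemma of_indeg F u w v : out_forest E F -> (u, v) \in F -> (w, v) \in F -> u = w.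
Proof.
case/and3P => _ /forallP /(_ v) /card_le1_eqP H _ uv wv.
by apply: H; rewrite inE.
Qed.

Lemma of_root F v : out_forest E F -> exists2 r, is_root F r & connect (srel F) r v.
Proof. by case/and3P => _ _ /forallP /(_ v) /existsP [r /andP [] ]; exists r. Qed.

Lemma conn_FE F a b : out_forest E F -> connect (srel F) a b -> connect E a b.
Proof. move=> oF; apply: (@connect_sub _ (srel F) E) => u v uv; apply: connect1; exact: of_arc oF uv. Qed.

Lemma root_no_in F a r : is_root F r -> connect (srel F) a r -> a = r.
Proof.
move=> /forallP Hr c; apply/eqP; apply/negPn/negP => ne.
case: (LA c ne) => w _ wr; move: (Hr w); rewrite /srel in wr; by rewrite wr.
Qed.

Lemma path_avoid F F' a s y : (forall u v, v != y -> (u,v) \in F -> (u,v) \in F') ->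
  path (srel F) a s -> y \notin s -> path (srel F') a s.
Proof.
move=> H; elim: s a => [|z s IH] a //=.
move=> /andP [az ps]; rewrite in_cons negb_or => /andP [yz ns].
apply/andP; split; last exact: IH.
by apply: H; rewrite // eq_sym.
Qed.

Definition Fs (F : {set V * V}) (x y : V) : {set V * V} :=
  (x, y) |: [set e in F | e.2 != y].

Lemma inFs F x y u v : ((u,v) \in Fs F x y) = ((u == x) && (v == y)) || (((u,v) \in F) && (v != y)).
Proof. by rewrite /Fs !inE /= xpair_eqE. Qed.

Lemma rootFs F x y v : is_root (Fs F x y) v = is_root F v && (v != y).
Proof.
apply/forallP/andP => [H | [/forallP H vy] u].
- have vy : v != y.
    by apply/negP => /eqP vy; have := H x; rewrite inFs vy !eqxx.
  split=> //; apply/forallP => u; have := H u.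
  by rewrite inFs (negbTE vy) andbF andbT.
- by rewrite inFs (negbTE vy) andbF andbT /=; exact: H.
Qed.

Lemma sub_Fs F x y u v : v != y -> (u,v) \in F -> (u,v) \in Fs F x y.
Proof. by move=> vy uv; rewrite inFs vy uv orbT. Qed.

Lemma of_Fs F x y : out_forest E F -> E x y -> ~~ connect (srel F) y x ->
  out_forest E (Fs F x y).
Proof.
move=> oF Exy nyx; apply/and3P; split.
- apply/forall_inP => [[u v]]; rewrite inFs => /orP [/andP [/eqP -> /eqP ->] // | /andP [/(of_arc oF) //]].
- apply/forallP => v; apply/card_le1_eqP => u1 u2; rewrite !inE /= !xpair_eqE.
  move=> /orP [/andP [/eqP -> /eqP ->] | /andP [h1 v1]].
    by rewrite eqxx andbT andbF orbF => /eqP.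
  rewrite (negbTE v1) andbF /= andbT => h2; exact: of_indeg oF h2 h1.
- apply/forallP => v.
  have [rx rxr cx] := of_root x oF.
  have rxy : rx != y by apply: contra nyx => /eqP <-.
  case: (boolP (connect (srel F) y v)) => cyv.
  + apply/existsP; exists rx; rewrite rootFs rxr rxy /=.
    case/connectP: cx => p px lx.
    have yp : y \notin p by apply: contra nyx => yp; rewrite lx; exact: split_conn px yp.
    have cF'x : connect (srel (Fs F x y)) rx x.
      by apply/connectP; exists p => //; apply: path_avoid px yp => u w; exact: sub_Fs.
    case/connectP: cyv => q qp; case/shortenP: qp => q' q'p uq _ lq.
    move: uq => /andP [yq' _].
    apply: (connect_trans cF'x); have exy : srel (Fs F x y) x y by rewrite /srel inFs !eqxx.
    apply: (connect_trans (connect1 exy)).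
    apply/connectP; exists q' => //; apply: path_avoid q'p yq' => u w; exact: sub_Fs.
  + have [r rr cr] := of_root v oF.
    have ry : r != y by apply: contra cyv => /eqP <-.
    apply/existsP; exists r; rewrite rootFs rr ry /=.
    case/connectP: cr => p pp lp.
    have yp : y \notin p by apply: contra cyv => yp; rewrite lp; exact: split_conn pp yp.
    by apply/connectP; exists p => //; apply: path_avoid pp yp => u w; exact: sub_Fs.
Qed.

Lemma card_Fs F x y : out_forest E F ->
  if is_root F y then #|Fs F x y| = #|F|.+1 else #|Fs F x y| = #|F|.
Proof.
move=> oF; rewrite /Fs cardsU1 inE /= eqxx andbF /=.
case: ifP => ry.
- suff -> : [set e in F | e.2 != y] = F by [].
  apply/setP => [[u v]]; rewrite inE /=; case: (eqVneq v y) => [-> | _]; last by rewrite andbT.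
  by rewrite (negbTE (forallP ry u)).
- move/negbT: ry => /forallPn [p /negPn py].
  suff -> : [set e in F | e.2 != y] = F :\ (p, y) by rewrite (cardsD1 (p, y) F) py.
  apply/setP => [[u v]]; rewrite !inE /= xpair_eqE.
  case: (eqVneq v y) => [-> | _]; last by rewrite /= andbT andbF.
  rewrite andbF andbT; case uy: ((u, y) \in F); last by rewrite andbF.
  by rewrite (of_indeg oF uy py) eqxx.
Qed.

Lemma desc_Fs F x y r : out_forest E F -> is_root F r -> connect (srel F) r y ->
  ~~ connect (srel F) r x -> y != r ->
  [set v | connect (srel (Fs F x y)) r v] \proper [set v | connect (srel F) r v].
Proof.
move=> oF rr cry nrx yr.
have key : forall v, connect (srel (Fs F x y)) r v ->
    connect (srel F) r v && ~~ connect (srel F) y v.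
  move=> v c; apply: (CL (P := fun u => connect (srel F) r u && ~~ connect (srel F) y u)) _ _ c.
  - move=> u w /andP [cru nyu]; rewrite /srel inFs => /orP [/andP [/eqP ux /eqP wy] | /andP [uwF wy]].
      by move: cru; rewrite ux (negbTE nrx).
    apply/andP; split; first exact: connect_trans cru (connect1 uwF).
    apply/negP => cyw; have yw : y != w by rewrite eq_sym.
    case: (LA cyw yw) => z cyz zw.
    by have := of_indeg oF uwF zw => uz; rewrite uz cyz in nyu.
  - rewrite connect0 /=; apply/negP => c'.
    by have := root_no_in rr c' => e; rewrite e eqxx in yr.
apply/properP; split.
- by apply/subsetP => v; rewrite !inE => /key /andP [].
- exists y; rewrite !inE //; apply/negP => /key /andP [_]; by rewrite connect0.
Qed.

Lemma cross (e : rel V) (P : pred V) a b : connect e a b -> ~~ P a -> P b ->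
  exists x y, [/\ e x y, ~~ P x & P y].
Proof.
move=> c na pb.
case: (boolP [exists x, exists y, [&& e x y, ~~ P x & P y]]).
  by move=> /existsP [x /existsP [y /and3P [? ? ?]]]; exists x, y.
move=> H; suff : ~~ P b by rewrite pb.
apply: (CL (P := fun u => ~~ P u)) _ na c => u v nu euv; apply/negP => pv.
by move/negP: H; apply; apply/existsP; exists u; apply/existsP; exists v; rewrite euv nu pv.
Qed.

Lemma aug r1 r2 : r1 != r2 -> connect E r1 r2 -> forall n F, out_forest E F ->
  is_root F r1 -> is_root F r2 ->
  #|[set v | connect (srel F) r2 v]| <= n -> exists2 G, out_forest E G & #|F| < #|G|.
Proof.
move=> ne c12; elim=> [|n IH] F oF rt1 rt2 hn.
  move: hn; rewrite leqn0 cards_eq0 => /eqP/setP/(_ r2).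
  by rewrite !inE connect0.
case: (cross (P := fun v => connect (srel F) r2 v) c12 _ _) => [||x [y [Exy nx cy]]].
- apply/negP => c; have := root_no_in rt1 c => e; by rewrite e eqxx in ne.
- exact: connect0.
have nyx : ~~ connect (srel F) y x by apply: contra nx; exact: connect_trans cy.
have oF' := of_Fs oF Exy nyx.
have := card_Fs x y oF; case: ifP => ry hc; first by exists (Fs F x y); rewrite // hc.
have yr2 : y != r2 by apply: contraFN ry => /eqP ->.
have ry1 : y != r1.
  by apply/eqP => e; move: cy; rewrite e => /(root_no_in rt1) e'; rewrite e' eqxx in ne.
have h1 : is_root (Fs F x y) r1 by rewrite rootFs rt1 eq_sym ry1.
have h2 : is_root (Fs F x y) r2 by rewrite rootFs rt2 eq_sym yr2.
have h3 : #|[set v | connect (srel (Fs F x y)) r2 v]| <= n.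
  by have := proper_card (desc_Fs oF rt2 cy nx yr2); move=> h; rewrite -ltnS; exact: leq_trans h hn.
have [G oG lt] := IH (Fs F x y) oF' h1 h2 h3.
by exists G => //; rewrite -hc.
Qed.

Lemma ML F r1 r2 : max_out_forest E F -> is_root F r1 -> is_root F r2 ->
  connect E r1 r2 -> r1 = r2.
Proof.
case/andP => oF /eqP hF rt1 rt2 c; apply/eqP; apply/negPn/negP => ne.
have [G oG lt] := aug ne c oF rt1 rt2 (leqnn _).
have := @leq_bigmax_cond _ (out_forest E) (fun F => #|F|) G oG.
by rewrite -/(max_forest_size E) -hF leqNgt lt.
Qed.

Lemma basis_pred S u v : is_basis_bicomp E S -> connect E u v -> v \in S -> u \in S.
Proof.
case/andP => _ /forallP H /connectP [p]; elim: p u => [|z p IH] u /=; first by move=> _ ->.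
case/andP => Euz pz lv vS; have zS := IH z pz lv vS.
by move: (H u) => /forallP /(_ z); rewrite Euz zS.
Qed.

Lemma basis_conn S a b : is_basis_bicomp E S -> a \in S -> b \in S -> connect E a b.
Proof.
case/andP => /existsP [k /eqP ->] _; rewrite !inE => /andP [_ ak] /andP [kb _].
exact: connect_trans ak kb.
Qed.

Lemma RB0 F r : max_out_forest E F -> is_root F r -> is_basis_bicomp E (strong_comp E r).
Proof.
move=> mF rr; have oF : out_forest E F by case/andP: mF.
apply/andP; split; first by apply/existsP; exists r.
apply/forallP => u; apply/forallP => v; apply/implyP => /andP [Euv].
rewrite !inE => /andP [crv cvr].
have cur : connect E u r := connect_trans (connect1 Euv) cvr.
rewrite cur andbT.
have [rho rhor crho] := of_root u oF.
have cE := conn_FE oF crho.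
by rewrite -(ML mF rhor rr (connect_trans cE cur)).
Qed.

Lemma RB F r : max_out_forest E F -> is_root F r -> r \in Ktilde E.
Proof.
move=> mF rr; rewrite inE; apply/existsP; exists (strong_comp E r).
by rewrite (RB0 mF rr) inE connect0.
Qed.

End Graph.

Local Open Scope ring_scope.
Section Num.
Variables (R : realFieldType) (I : finType).

Lemma SS (P1 P2 : pred I) (f : I -> R) : (forall F, P1 F -> P2 F) ->
  (forall F, P2 F -> 0 <= f F) -> \sum_(F | P1 F) f F <= \sum_(F | P2 F) f F.
Proof.
move=> H f0; rewrite (bigID P1 P2) /=.
rewrite (eq_bigl P1); last by move=> F; apply/andP/idP => [[] | h] //; split=> //; exact: H.
rewrite lerDl; apply: sumr_ge0 => F /andP [h _]; exact: f0.
Qed.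

End Num.

Local Open Scope ring_scope.

Lemma fw_ge0 (R : realFieldType) (V : finType) (E : rel V) (w : V -> V -> R) F :
  (forall i j, E i j -> 0 < w i j) -> out_forest E F -> 0 <= fweight w F.
Proof.
move=> wpos oF; apply: prodr_ge0 => a aF; apply: ltW; apply: wpos.
by case: a aF => u v; exact: of_arc oF.
Qed.

Lemma PE (R : realFieldType) (V : finType) (E : rel V) (w : V -> V -> R) a b :
  0 < Jbar E w a b -> exists F, max_out_forest E F && in_tree_of F a b.
Proof.
case: (pickP (fun F => max_out_forest E F && in_tree_of F a b)) => [F h _ | none]; first by exists F.
by rewrite /Jbar big_pred0 // mul0r ltxx.
Qed.

Lemma JLE (R : realFieldType) (V : finType) (E : rel V) (w : V -> V -> R) i j :
  (forall i j, E i j -> 0 < w i j) -> Jbar E w j i <= Jbar E w i i.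
Proof.
move=> wpos; rewrite /Jbar; apply: ler_wpM2r.
  by rewrite invr_ge0; apply: sumr_ge0 => F mF; apply: fw_ge0 wpos _; case/andP: mF.
apply: SS.
  by move=> F /andP [-> /andP [r _]]; rewrite /in_tree_of r connect0.
by move=> F /andP [mF _]; apply: fw_ge0 wpos _; case/andP: mF.
Qed.

Lemma ST (R : realFieldType) (V : finType) (E : rel V) (w : V -> V -> R) i j :
  Jbar E w j i < Jbar E w i i ->
  exists G, [/\ max_out_forest E G, is_root G i & ~~ connect (srel G) i j].
Proof.
case: (pickP (fun G => (max_out_forest E G && in_tree_of G i i) && ~~ (max_out_forest E G && in_tree_of G j i))).
  move=> G /andP [/andP [mG /andP [r _]] h] _; exists G; split=> //.
  by apply: contra h => c; rewrite mG /in_tree_of r c.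
move=> none; suff -> : Jbar E w j i = Jbar E w i i by rewrite ltxx.
rewrite /Jbar; congr (_ / _); apply: eq_bigl => G.
have := none G; case h: (max_out_forest E G && in_tree_of G j i) => /=.
  by move: h => /andP [-> /andP [r _]]; rewrite /in_tree_of r connect0.
by rewrite andbT => ->.
Qed.

Unset Implicit Arguments.
Theorem theorem3 (R : realFieldType) (V : finType) (E : rel V) (w : V -> V -> R)
  (noloop : forall i, ~~ E i i) (wpos : forall i j, E i j -> 0 < w i j) :
  forall i j : V,
  [/\ Jbar E w j i <= Jbar E w i i,
      Jbar E w j i < Jbar E w i i ->
        [/\ i \in Ktilde E, j \notin Kplus E i & ~~ connect E j i],
      0 < Jbar E w j i < Jbar E w i i ->
        j \notin Ktilde E /\
        (forall F : {set V * V}, max_out_forest E F -> ~~ is_root F j) &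
      0 < Jbar E w i j -> Jbar E w i i = Jbar E w j i].
Proof.
move=> i j; split.
- exact: JLE.
- move=> lt; have [G [mG ri nij]] := ST lt.
  have oG : out_forest E G by case/andP: mG.
  have [rho rr crj] := of_root j oG.
  have cE := conn_FE oG crj.
  split.
  + exact: RB mG ri.
  + rewrite inE negb_and; apply/orP; right; apply/forallPn; exists (strong_comp E rho).
    rewrite negb_imply (RB0 mG rr) /=.
    case: (eqVneq (strong_comp E rho) (Kof E i)) => [e | ne] /=.
      have : rho \in Kof E i by rewrite -e inE connect0.
      rewrite inE => /andP [cir _].
      by move: nij; rewrite (ML mG ri rr cir) crj.
    apply/forall_inPn; exists rho; first by rewrite inE connect0.
    by rewrite negbK.
  + apply/negP => cji; have := ML mG rr ri (connect_trans cE cji) => e.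
    by move: nij; rewrite -e crj.
- case/andP => pos lt; have [G [mG ri nij]] := ST lt.
  have [F /andP [mF /andP [rFi cij]]] := PE pos.
  have oG : out_forest E G by case/andP: mG.
  have oF : out_forest E F by case/andP: mF.
  have nK : j \notin Ktilde E.
    apply/negP; rewrite inE => /existsP [S /andP [bS jS]].
    have iS := basis_pred bS (conn_FE oF cij) jS.
    have [rho rr crj] := of_root j oG.
    have rS := basis_pred bS (conn_FE oG crj) jS.
    have := ML mG ri rr (basis_conn bS iS rS) => e.
    by move: nij; rewrite e crj.
  split=> // F' mF'; apply: contra nK; exact: RB mF'.
- move=> /PE [F /andP [mF /andP [rFj cji]]].
  have oF : out_forest E F by case/andP: mF.
  rewrite /Jbar; congr (_ / _); apply: eq_bigl => G.
  apply/andP/andP => [[mG /andP [ri _]] | [mG /andP [ri _]]]; split=> //; last by rewrite /in_tree_of ri connect0.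
  have oG : out_forest E G by case/andP: mG.
  have [rho rr crj] := of_root j oG.
  have := ML mG rr ri (connect_trans (conn_FE oG crj) (conn_FE oF cji)) => e.
  by rewrite /in_tree_of ri -e crj.
Qed.
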